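(* Assume $B\subseteq A\subsetneq[m]$. (a) If $q\ge3$, or $q=2$ and $|A|\le m-2$, then the dual code $\mathcal C_{\overline{\mathcal N}_2}^\perp$ is a linear code over $\mathbb F_q$ with parameters $\left[\frac{2q^{|B|+|C|}(q^m-q^{|A|})}{q-1},\ \frac{2q^{|B|+|C|}(q^m-q^{|A|})}{q-1}-2m-|C|,\ 3\right]$. (b) If $q=2$ and $|A|=m-1$, then $\mathcal C_{\overline{\mathcal N}_2}^\perp$ is a binary distance-optimal code with parameters $[2^{m+|B|+|C|},\ 2^{m+|B|+|C|}-2m-|C|,\ 4]$.
   Context: $q$ is a prime power, $\mathbb F_q$ the field of order $q$, $\mathbb F_q^*=\mathbb F_q\setminus\{0\}$, $m\ge2$, $[m]=\{1,\dots,m\}$, $\mathrm{supp}(v)=\{i:v_i\ne0\}$. For nonempty $P\subseteq[m]$, $\Delta_P=\{v\in\mathbb F_q^m:\mathrm{supp}(v)\subseteq P\}$, $\Delta_P^c=\mathbb F_q^m\setminus\Delta_P$. $A,B,C$ are nonempty subsets of $[m]$. Let $\mathcal N_2=\{(w_2+\omega,w_3,w_1)\in\mathbb F_q^{3m}: w_1\in\Delta_A^c,\ w_2\in\Delta_B,\ w_3\in\Delta_C,\ \omega\in\{\mathbf 0,w_1\}\}$ (closed under multiplication by $\mathbb F_q^*$), let $\overline{\mathcal N}_2$ contain exactly one element of each class $\{\alpha x:\alpha\in\mathbb F_q^*\}$, $x\in\mathcal N_2$, and let $\mathcal C_{\overline{\mathcal N}_2}$ be the linear code over $\mathbb F_q$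 spanned by the rows of the $3m\times|\overline{\mathcal N}_2|$ matrix whose columns are the elements of $\overline{\mathcal N}_2$. $\mathcal C^\perp$ is the dual with respect to the Euclidean inner product. An $[n,k,d]$ code is distance-optimal if no linear $[n,k,d+1]$ code over the same field exists. *)

(* Defs.v *)
From HB Require Import structures.
From mathcomp Require Import all_boot all_order all_algebra.
Set Implicit Arguments. Unset Strict Implicit. Unset Printing Implicit Defensive.
Import GRing.Theory.
Local Open Scope ring_scope.

Section Codes.
Variable F : finFieldType.

Definition supp (m : nat) (v : 'rV[F]_m) : {set 'I_m} := [set i | v 0 i != 0].

Definition inDelta (m : nat) (P : {set 'I_m}) (v : 'rV[F]_m) : bool :=
  supp v \subset P.

Definition wt (n : nat) (v : 'rV[F]_n) : nat := #|supp v|.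

(* A linear code of length n over F is the row space of a matrix
   C : 'M[F]_(k, n); codewords are the row vectors in that row space. *)
Definition codeword (k n : nat) (C : 'M[F]_(k, n)) (v : 'rV[F]_n) : bool :=
  (v <= C)%MS.

Definition code_dim (k n : nat) (C : 'M[F]_(k, n)) : nat := \rank C.

(* Euclidean dual: the row space of kermx C^T is exactly
   { u | u *m C^T = 0 }, i.e. the vectors orthogonal to every row of C
   (hence to every codeword). *)
Definition dual_code (k n : nat) (C : 'M[F]_(k, n)) : 'M[F]_n := kermx C^T.

Definition min_dist (k n : nat) (C : 'M[F]_(k, n)) (d : nat) : Prop :=
  (exists2 v, codeword C v & (v != 0) && (wt v == d)) /\
  (forall v, codeword C v -> v != 0 -> (d <= wt v)%N).

Definition code_params (k0 n : nat) (C : 'M[F]_(k0, n)) (k d : nat) : Prop :=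
  code_dim C = k /\ min_dist C d.

Definition distance_optimal (k0 n : nat) (C : 'M[F]_(k0, n)) (d : nat) : Prop :=
  forall (k1 : nat) (D : 'M[F]_(k1, n)), ~ code_params D (code_dim C) d.+1.

Definition inN2 (m : nat) (A B C : {set 'I_m}) (x : 'rV[F]_(m + m + m)) : Prop :=
  exists (w1 w2 w3 om : 'rV[F]_m),
    [/\ ~~ inDelta A w1, inDelta B w2, inDelta C w3,
        (om == 0) || (om == w1) &
        x = row_mx (row_mx (w2 + om) w3) w1].

(* col : 'I_n -> F^{3m} enumerates (without repetition) a set N2bar
   containing exactly one element of each class {alpha x | alpha <> 0},
   x in N_2. *)
Definition projective_rep_system (m : nat) (A B C : {set 'I_m}) (n : nat)
    (col : 'I_n -> 'rV[F]_(m + m + m)) : Prop :=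
  [/\ forall j, inN2 A B C (col j),
      forall x, inN2 A B C x -> exists j, exists2 a : F, a != 0 & x = a *: col j &
      forall i j (a : F), a != 0 -> col i = a *: col j -> i = j].

Definition gen_matrix (m n : nat) (col : 'I_n -> 'rV[F]_(m + m + m)) :
  'M[F]_(m + m + m, n) := \matrix_(i, j) col j 0 i.

End Codes.

(* Main.v *)
Require Import Defs.
From HB Require Import structures.
From mathcomp Require Import all_boot all_order all_algebra.
From mathcomp Require Import mxabelem zify.
Set Implicit Arguments. Unset Strict Implicit. Unset Printing Implicit Defensive.
Import GRing.Theory.
Local Open Scope ring_scope.

Section Basic.
Variable F : finFieldType.
Variable m : nat.
Implicit Types (P : {set 'I_m}) (v w : 'rV[F]_m).

Lemma inDeltaP P v : reflect (forall i, i \notin P -> v 0 i = 0) (inDelta P v).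
Proof.
apply: (iffP subsetP) => [H i iP|H i].
  by apply/eqP; apply: contraNT iP => vi; apply: H; rewrite inE.
by rewrite inE; apply: contraR => /H ->.
Qed.

Lemma inDelta0 P : inDelta P (0 : 'rV[F]_m).
Proof. by apply/inDeltaP => i _; rewrite mxE. Qed.

Lemma inDeltaB P v w : inDelta P v -> inDelta P w -> inDelta P (v - w).
Proof.
move=> /inDeltaP hv /inDeltaP hw; apply/inDeltaP => i iP.
by rewrite !mxE hv // hw // subr0.
Qed.

Lemma inDeltaD P v w : inDelta P v -> inDelta P w -> inDelta P (v + w).
Proof.
move=> /inDeltaP hv /inDeltaP hw; apply/inDeltaP => i iP.
by rewrite !mxE hv // hw // addr0.
Qed.

Lemma inDeltaZ P a v : inDelta P v -> inDelta P (a *: v).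
Proof.
move=> /inDeltaP hv; apply/inDeltaP => i iP.
by rewrite !mxE hv // mulr0.
Qed.

Lemma inDelta_sub P (Q : {set 'I_m}) v : P \subset Q -> inDelta P v -> inDelta Q v.
Proof. by move=> PQ vP; apply: subset_trans PQ. Qed.

Lemma notDelta_neq0 P v : ~~ inDelta P v -> v != 0.
Proof. by apply: contraNneq => ->; apply: inDelta0. Qed.

Definition rowof (f : {ffun 'I_m -> F}) : 'rV[F]_m := \row_i f i.

Lemma cardDelta P : #|[set v : 'rV[F]_m | inDelta P v]| = (#|F| ^ #|P|)%N.
Proof.
have inj : injective rowof.
  by move=> f g /rowP H; apply/ffunP => i; have := H i; rewrite !mxE.
have -> : [set v : 'rV[F]_m | inDelta P v] = [set rowof f | f in pffun_on 0 P predT].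
  apply/setP => v; rewrite inE; apply/idP/imsetP.
    move=> /inDeltaP hv; exists [ffun i => v 0 i].
      apply/pffun_onP; split => //; apply/subsetP => i; rewrite inE ffunE.
      by apply: contraR => /hv ->.
    by apply/rowP => i; rewrite !mxE ffunE.
  move=> [f /pffun_onP [hs _] ->]; apply/inDeltaP => i iP; rewrite mxE.
  by apply/eqP; apply: contraR iP => fi; apply: (subsetP hs); rewrite inE.
by rewrite card_imset // card_pffun_on.
Qed.

End Basic.

Section Main.
Variables (F : finFieldType) (m : nat) (A B C : {set 'I_m}).
Hypothesis hBA : B \subset A.
Hypothesis hAm : A \proper [set: 'I_m].
Variables (n : nat) (col : 'I_n -> 'rV[F]_(m + m + m)).
Hypothesis hcol : projective_rep_system A B C col.

Definition mk3 (x y z : 'rV[F]_m) : 'rV[F]_(m + m + m) := row_mx (row_mx x y) z.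

Lemma mk3_inj (x y z x' y' z' : 'rV[F]_m) : mk3 x y z = mk3 x' y' z' -> [/\ x = x', y = y' & z = z'].
Proof. by move=> /eq_row_mx [/eq_row_mx [-> ->] ->]. Qed.

Lemma mk3D (x y z x' y' z' : 'rV[F]_m) : mk3 x y z + mk3 x' y' z' = mk3 (x + x') (y + y') (z + z').
Proof. by rewrite /mk3 !add_row_mx. Qed.

Lemma mk3Z (a : F) (x y z : 'rV[F]_m) : a *: mk3 x y z = mk3 (a *: x) (a *: y) (a *: z).
Proof. by rewrite /mk3 !scale_row_mx. Qed.

Lemma mk3N (x y z : 'rV[F]_m) : - mk3 x y z = mk3 (- x) (- y) (- z).
Proof. by rewrite /mk3 !opp_row_mx. Qed.

Lemma mk3B (x y z x' y' z' : 'rV[F]_m) : mk3 x y z - mk3 x' y' z' = mk3 (x - x') (y - y') (z - z').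
Proof. by rewrite mk3N mk3D. Qed.

Lemma mk3_surj (v : 'rV[F]_(m + m + m)) :
  v = mk3 (lsubmx (lsubmx v)) (rsubmx (lsubmx v)) (rsubmx v).
Proof. by rewrite /mk3 !hsubmxK. Qed.

Definition i1 (k : 'I_m) : 'I_(m + m + m) := lshift m (lshift m k).
Definition i2 (k : 'I_m) : 'I_(m + m + m) := lshift m (rshift m k).
Definition i3 (k : 'I_m) : 'I_(m + m + m) := rshift (m + m) k.

Lemma mk3E1 (x y z : 'rV[F]_m) k : mk3 x y z 0 (i1 k) = x 0 k.
Proof. by rewrite /mk3 /i1 !row_mxEl. Qed.
Lemma mk3E2 (x y z : 'rV[F]_m) k : mk3 x y z 0 (i2 k) = y 0 k.
Proof. by rewrite /mk3 /i2 row_mxEl row_mxEr. Qed.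
Lemma mk3E3 (x y z : 'rV[F]_m) k : mk3 x y z 0 (i3 k) = z 0 k.
Proof. by rewrite /mk3 /i3 row_mxEr. Qed.

Lemma inN2E (x : 'rV[F]_(m + m + m)) : inN2 A B C x <->
  exists w1 w2 w3 om, [/\ ~~ inDelta A w1, inDelta B w2, inDelta C w3,
        (om == 0) || (om == w1) & x = mk3 (w2 + om) w3 w1].
Proof. by []. Qed.

Lemma col_N2 j : inN2 A B C (col j).
Proof. by case: hcol => H _ _; apply: H. Qed.

Lemma N2_col (x : 'rV[F]_(m + m + m)) : inN2 A B C x -> exists j, exists2 a : F, a != 0 & x = a *: col j.
Proof. by case: hcol => _ H _; apply: H. Qed.

Lemma col_prop i j (a : F) : a != 0 -> col i = a *: col j -> i = j.
Proof. by case: hcol => _ _ H; apply: H. Qed.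

Lemma N2_neq0 (x : 'rV[F]_(m + m + m)) : inN2 A B C x -> x != 0.
Proof.
move=> [w1 [w2 [w3 [om [h1 _ _ _ ->]]]]].
apply: contraNneq h1 => /(congr1 rsubmx); rewrite row_mxKr => ->.
by rewrite linear0 inDelta0.
Qed.

Lemma col_neq0 j : col j != 0.
Proof. exact: N2_neq0 (col_N2 j). Qed.

Definition GT := (gen_matrix col)^T.

Lemma rowGT j : row j GT = col j.
Proof. by apply/rowP => k; rewrite !mxE. Qed.

Lemma mulGT (v : 'rV[F]_n) : v *m GT = \sum_j v 0 j *: col j.
Proof. by rewrite mulmx_sum_row; apply: eq_bigr => j _; rewrite rowGT. Qed.

Lemma codewordE (v : 'rV[F]_n) :
  codeword (dual_code (gen_matrix col)) v = (\sum_j v 0 j *: col j == 0).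
Proof. by rewrite /codeword /dual_code sub_kermx -mulGT. Qed.

Lemma N2_sub (x : 'rV[F]_(m + m + m)) : inN2 A B C x -> (x <= GT)%MS.
Proof.
move=> /N2_col [j [a _ ->]]; apply: scalemx_sub; rewrite -rowGT; exact: row_sub.
Qed.

Lemma exists_i0 : exists2 i0, i0 \notin A & True.
Proof. by case/properP: hAm => _ [i0 _ h]; exists i0. Qed.

Lemma notA_gen (Q : 'rV[F]_m -> Prop) :
  (forall a b, Q a -> Q b -> Q (a - b)) ->
  (forall z, ~~ inDelta A z -> Q z) -> forall z, Q z.
Proof.
move=> QB QN z; have [zA|] := boolP (inDelta A z); last exact: QN.
have [i0 i0A _] := exists_i0.
set u0 : 'rV[F]_m := delta_mx 0 i0.
have u0N : ~~ inDelta A u0.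
  apply/negP => /inDeltaP /(_ _ i0A); rewrite mxE !eqxx /=; apply/eqP; exact: oner_neq0.
have zuN : ~~ inDelta A (z + u0).
  apply/negP => /inDeltaP /(_ _ i0A); rewrite !mxE !eqxx /=.
  move/inDeltaP: zA => -> //; rewrite add0r; apply/eqP; exact: oner_neq0.
have -> : z = (z + u0) - u0 by rewrite addrK.
by apply: QB; apply: QN.
Qed.

Definition inV (v : 'rV[F]_(m + m + m)) := inDelta C (rsubmx (lsubmx v)).

Lemma subGT_inV (v : 'rV[F]_(m + m + m)) : (v <= GT)%MS = inV v.
Proof.
apply/idP/idP.
  move=> /submxP [u ->]; apply/inDeltaP => k kC.
  rewrite mxE mxE mulGT summxE big1 // => j _.
  have [w1 [w2 [w3 [om [_ _ h3 _ ->]]]]] := col_N2 j.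
  rewrite mxE; have := mk3E2 (w2 + om) w3 w1 k; rewrite /mk3 /i2 => ->.
  by move/inDeltaP: h3 => -> //; rewrite mulr0.
move=> hv; rewrite [v]mk3_surj.
set x := lsubmx (lsubmx v); set y := rsubmx (lsubmx v); set z := rsubmx v.
have L1 : forall z, (mk3 0 0 z <= GT)%MS.
  apply: notA_gen => [a b ha hb|z' hz].
    have -> : mk3 0 0 (a - b) = mk3 0 0 a - mk3 0 0 b by rewrite mk3B subr0.
    by rewrite addmx_sub // -scaleN1r scalemx_sub.
  apply: N2_sub; exists z', 0, 0, 0; split => //; rewrite ?inDelta0 ?eqxx //.
  by rewrite addr0.
have [i0 i0A _] := exists_i0.
set u0 : 'rV[F]_m := delta_mx 0 i0.
have u0N : ~~ inDelta A u0.
  apply/negP => /inDeltaP /(_ _ i0A); rewrite mxE !eqxx /=; apply/eqP; exact: oner_neq0.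
have L2 : forall x, (mk3 x 0 0 <= GT)%MS.
  apply: notA_gen => [a b ha hb|x' hx].
    have -> : mk3 (a - b) 0 0 = mk3 a 0 0 - mk3 b 0 0 by rewrite mk3B subr0.
    by rewrite addmx_sub // -scaleN1r scalemx_sub.
  have -> : mk3 x' 0 0 = mk3 x' 0 x' - mk3 0 0 x' by rewrite mk3B !subr0 subrr.
  rewrite addmx_sub // -?scaleN1r ?scalemx_sub //.
  apply: N2_sub; exists x', 0, 0, x'; split => //; rewrite ?inDelta0 ?eqxx ?orbT //.
  by rewrite add0r.
have L3 : (mk3 0 y 0 <= GT)%MS.
  have -> : mk3 0 y 0 = mk3 0 y u0 - mk3 0 0 u0 by rewrite mk3B !subr0 subrr.
  rewrite addmx_sub // -?scaleN1r ?scalemx_sub //.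
  apply: N2_sub; exists u0, 0, y, 0; split => //; rewrite ?inDelta0 ?eqxx //.
  by rewrite addr0.
have -> : mk3 x y z = mk3 x 0 0 + mk3 0 y 0 + mk3 0 0 z by rewrite !mk3D !addr0 !add0r.
by rewrite !addmx_sub.
Qed.


Lemma card_rV : #|{: 'rV[F]_m}| = (#|F| ^ m)%N.
Proof. by rewrite card_mx mul1n. Qed.

Lemma cardV : #|[set v | inV v]| = (#|F| ^ (m + #|C| + m))%N.
Proof.
pose f (t : ('rV[F]_m * 'rV[F]_m) * 'rV[F]_m) := mk3 t.1.1 t.1.2 t.2.
have finj : injective f.
  by move=> [[x y] z] [[x' y'] z'] /mk3_inj [/= -> -> ->].
have -> : [set v | inV v] =
   [set f t | t in setX (setX [set: 'rV[F]_m] [set v : 'rV[F]_m | inDelta C v]) [set: 'rV[F]_m]].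
  apply/setP => v; rewrite inE; apply/idP/imsetP.
    move=> hv; exists ((lsubmx (lsubmx v), rsubmx (lsubmx v)), rsubmx v).
      by rewrite !inE /= andbT.
    exact: mk3_surj.
  move=> [[[x y] z]]; rewrite !inE /= andbT => hy ->.
  by rewrite /inV /f /mk3 /= row_mxKl row_mxKr.
rewrite card_imset // !cardsX cardsT cardDelta card_rV -!expnD.
by [].
Qed.

Lemma q_gt1 : (1 < #|F|)%N.
Proof. exact: card_finNzRing_gt1. Qed.

Lemma rankGT : \rank GT = (m + #|C| + m)%N.
Proof.
apply/eqP; rewrite -(eqn_exp2l _ _ q_gt1) -card_rowg -cardV.
apply/eqP; apply: eq_card => v; by rewrite !inE subGT_inV.
Qed.

Lemma rank_dual : code_dim (dual_code (gen_matrix col)) = (n - (m + #|C| + m))%N.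
Proof. by rewrite /code_dim /dual_code mxrank_ker -rankGT. Qed.

Lemma rankGT_le : (m + #|C| + m <= n)%N.
Proof. rewrite -rankGT; exact: rank_leq_row. Qed.


Definition f2 (t : (('rV[F]_m * 'rV[F]_m) * 'rV[F]_m) * bool) :=
  mk3 (t.1.1.2 + (if t.2 then t.1.1.1 else 0)) t.1.2 t.1.1.1.

Definition Dom2 := setX (setX (setX [set w : 'rV[F]_m | ~~ inDelta A w]
   [set w : 'rV[F]_m | inDelta B w]) [set w : 'rV[F]_m | inDelta C w]) [set: bool].

Definition N2set := [set f2 t | t in Dom2].

Lemma N2setP (x : 'rV[F]_(m + m + m)) : inN2 A B C x <-> x \in N2set.
Proof.
split.
  move=> [w1 [w2 [w3 [om [h1 h2 h3 hom ->]]]]]; apply/imsetP.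
  case/orP: hom => /eqP ->.
    by exists (w1, w2, w3, false); rewrite ?inE ?h1 ?h2 ?h3.
  by exists (w1, w2, w3, true); rewrite ?inE ?h1 ?h2 ?h3.
move=> /imsetP [[[[w1 w2] w3] b]]; rewrite !inE /= andbT => /andP [/andP [h1 h2] h3] ->.
exists w1, w2, w3, (if b then w1 else 0); split => //.
by case: b; rewrite eqxx ?orbT.
Qed.

Lemma card_nA : #|[set w : 'rV[F]_m | ~~ inDelta A w]| = (#|F| ^ m - #|F| ^ #|A|)%N.
Proof.
have -> : [set w : 'rV[F]_m | ~~ inDelta A w] = ~: [set w | inDelta A w].
  by apply/setP => w; rewrite !inE.
have := cardsC [set w : 'rV[F]_m | inDelta A w]; rewrite cardDelta card_rV => <-.
by rewrite addKn.
Qed.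

Lemma cardN2set : #|N2set| = ((#|F| ^ m - #|F| ^ #|A|) * #|F| ^ #|B| * #|F| ^ #|C| * 2)%N.
Proof.
rewrite /N2set card_in_imset; last first.
  move=> [[[w1 w2] w3] b] [[[w1' w2'] w3'] b']; rewrite !inE /= !andbT.
  move=> /andP [/andP [h1 h2] h3] /andP [/andP [h1' h2'] h3'].
  rewrite /f2 /= => /mk3_inj [e1 e3 e2]; subst w3' w1'.
  case: b b' e1 => [] [] e1.
  - by move/addIr: e1 => ->.
  - exfalso; move: h1; rewrite addr0 in e1.
    have -> : w1 = w2' - w2 by rewrite -e1 [w2 + w1]addrC addrK.
    by rewrite (inDelta_sub hBA) // inDeltaB.
  - exfalso; move: h1; rewrite addr0 in e1.
    have -> : w1 = w2 - w2' by rewrite e1 [w2' + w1]addrC addrK.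
    by rewrite (inDelta_sub hBA) // inDeltaB.
  - by rewrite !addr0 in e1; rewrite e1.
by rewrite !cardsX cardsT card_bool card_nA !cardDelta.
Qed.

Lemma inN2Z (a : F) (x : 'rV[F]_(m + m + m)) : a != 0 -> inN2 A B C x -> inN2 A B C (a *: x).
Proof.
move=> a0 [w1 [w2 [w3 [om [h1 h2 h3 hom ->]]]]].
exists (a *: w1), (a *: w2), (a *: w3), (a *: om); split.
- apply: contra h1 => /(inDeltaZ a^-1); by rewrite scalerA mulVf // scale1r.
- exact: inDeltaZ.
- exact: inDeltaZ.
- by case/orP: hom => /eqP ->; rewrite ?scaler0 eqxx ?orbT.
- by rewrite mk3Z scalerDr.
Qed.

Lemma n_card : #|N2set| = (n * (#|F| - 1))%N.
Proof.
pose g (t : 'I_n * F) := t.2 *: col t.1.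
have -> : N2set = [set g t | t in setX [set: 'I_n] [set a : F | a != 0]].
  apply/setP => x; apply/idP/imsetP.
    move=> /N2setP /N2_col [j [a a0 ->]].
    by exists (j, a); rewrite ?inE.
  move=> [[j a]]; rewrite !inE /= => a0 ->; apply/N2setP.
  exact: inN2Z a0 (col_N2 j).
rewrite card_in_imset.
  rewrite cardsX cardsT card_ord; congr (_ * _)%N.
  have -> : [set a : F | a != 0] = [set~ 0] by apply/setP => a; rewrite !inE.
  by rewrite cardsC1 subn1.
move=> [i a] [j b]; rewrite !inE /= => a0 b0; rewrite /g /= => e.
have eij : i = j.
  apply: (@col_prop i j (a^-1 * b)); first by rewrite mulf_neq0 ?invr_eq0.
  by rewrite -scalerA -e scalerA mulVf // scale1r.
subst j; congr (_, _); apply/eqP; rewrite -subr_eq0.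
move/eqP: e; rewrite -subr_eq0 -scalerBl scaler_eq0 => /orP [//|].
by rewrite (negbTE (col_neq0 i)).
Qed.


Definition Cd := dual_code (gen_matrix col).

Lemma wt_exists (s : seq 'I_n) (c : 'I_n -> F) : (0 < size s)%N -> uniq s ->
  (forall j, j \in s -> c j != 0) -> \sum_(j <- s) c j *: col j = 0 ->
  exists2 v, codeword Cd v & (v != 0) && (wt v == size s).
Proof.
move=> s0 us cs hs; pose v : 'rV[F]_n := \row_j (if j \in s then c j else 0).
have suppv : supp v = [set j in s].
  apply/setP => j; rewrite !inE mxE; case: ifP => js; first by rewrite cs.
  by rewrite eqxx.
have wv : wt v = size s by rewrite /wt suppv cardsE; apply/card_uniqP.
exists v.
  rewrite /Cd codewordE; apply/eqP; rewrite -[RHS]hs (big_uniq _ us).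
  rewrite [RHS]big_mkcond; apply: eq_bigr => j _; rewrite mxE; case: ifP => _ //; rewrite scale0r.
by []. rewrite wv eqxx andbT; apply/eqP => v0; move: wv; rewrite v0.
rewrite /wt (_ : supp 0 = set0) ?cards0; first by move=> e; rewrite -e in s0.
by apply/setP => j; rewrite !inE mxE eqxx.
Qed.

Lemma supp_D1 (v : 'rV[F]_n) i : v 0 i != 0 -> wt v = (1 + #|supp v :\ i|)%N.
Proof. by move=> vi; rewrite /wt (cardsD1 i) inE vi. Qed.

Lemma wt_ge3 (v : 'rV[F]_n) : codeword Cd v -> v != 0 -> (3 <= wt v)%N.
Proof.
rewrite /Cd codewordE => /eqP hs v0.
have [i vi] : exists i, v 0 i != 0.
  apply/existsP; apply: contraNT v0; rewrite negb_exists => /forallP H.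
  by apply/eqP/rowP => k; rewrite mxE; apply/eqP; move: (H k); rewrite negbK.
rewrite (supp_D1 vi).
have [e|[j]] := set_0Vmem (supp v :\ i).
  exfalso; move: hs; rewrite (bigD1 i) //= big1 ?addr0.
    by apply/eqP; rewrite scaler_eq0 (negbTE vi) (negbTE (col_neq0 i)).
  move=> k ki; have : k \notin supp v :\ i by rewrite e inE.
  by rewrite !inE ki /= negbK => /eqP ->; rewrite scale0r.
rewrite !inE => /andP [ji vj].
rewrite (cardsD1 j) !inE ji vj /= ltnS.
rewrite add1n ltnS lt0n; apply/negP => /eqP /cards0_eq e; exfalso.
move: hs; rewrite (bigD1 i) //= (bigD1 j) //= big1 ?addr0.
  move/eqP; rewrite addr_eq0 => /eqP e2.
  have H : col i = (- (v 0 i)^-1 * v 0 j) *: col j.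
    by rewrite mulNr scaleNr -scalerA -scalerN -e2 scalerA mulVf // scale1r.
  have := @col_prop i j _ _ H; rewrite mulf_neq0 ?oppr_eq0 ?invr_eq0 //.
  by move=> /(_ isT) eij; rewrite eij eqxx in ji.
move=> k /andP [ki kj]; have : k \notin supp v :\ i :\ j by rewrite e inE.
by rewrite !inE ki kj /= negbK => /eqP ->; rewrite scale0r.
Qed.


Section F2.
Hypothesis q2 : #|F| = 2%N.

Lemma F2_01 (x : F) : x != 0 -> x = 1.
Proof.
have e : [set (0 : F); 1] = [set: F].
  apply/eqP; rewrite eqEcard subsetT cardsT cards2 q2.
  by rewrite eq_sym oner_eq0.
move=> x0; have : x \in [set: F] by [].
by rewrite -e !inE (negbTE x0) => /eqP.
Qed.

Lemma F2_2 : (1 + 1 : F) = 0.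
Proof.
apply/eqP; apply: contraT => h; have := F2_01 h => /eqP.
by rewrite -subr_eq0 addrK oner_eq0.
Qed.

Variable i0 : 'I_m.
Hypothesis hi0 : forall k, (k \notin A) = (k == i0).

Lemma col_i0 j : col j 0 (i3 i0) = 1.
Proof.
have [w1 [w2 [w3 [om [h1 _ _ _ ->]]]]] := col_N2 j.
have := mk3E3 (w2 + om) w3 w1 i0; rewrite /mk3 => ->.
apply: F2_01; apply: contra h1 => /eqP h; apply/inDeltaP => k.
by rewrite hi0 => /eqP ->.
Qed.

Lemma wt_ge4 (v : 'rV[F]_n) : codeword Cd v -> v != 0 -> (4 <= wt v)%N.
Proof.
move=> cv v0; have := wt_ge3 cv v0; rewrite leq_eqVlt => /orP [/eqP w3|//].
exfalso; move: cv; rewrite /Cd codewordE => /eqP /rowP /(_ (i3 i0)).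
rewrite summxE mxE.
have -> : \sum_j (v 0 j *: col j) 0 (i3 i0) = \sum_(j in supp v) 1.
  rewrite [RHS]big_mkcond /=; apply: eq_bigr => j _; rewrite mxE col_i0 mulr1 inE.
  by case: eqP => [->|/eqP /F2_01].
rewrite sumr_const -/(wt v) -w3 /= !mulrS mulr0n addr0 addrA F2_2 add0r.
by apply/eqP; rewrite oner_eq0.
Qed.


Lemma vv (v : 'rV[F]_m) : v + v = 0.
Proof. by rewrite -{1 2}[v]scale1r -scalerDl F2_2 scale0r. Qed.

Lemma N2_col1 (x : 'rV[F]_(m + m + m)) : inN2 A B C x -> exists j, x = col j.
Proof.
by move=> /N2_col [j [a a0 ->]]; exists j; rewrite (F2_01 a0) scale1r.
Qed.

Lemma exists_w4 (k : 'I_m) : k \in B ->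
  exists2 v, codeword Cd v & (v != 0) && (wt v == 4%N).
Proof.
move=> kB.
have ki0 : (k == i0) = false by rewrite -hi0 (subsetP hBA).
set e : 'rV[F]_m := delta_mx 0 i0; set b : 'rV[F]_m := delta_mx 0 k.
have eN : ~~ inDelta A e.
  apply/negP => /inDeltaP /(_ i0); rewrite hi0 eqxx mxE !eqxx => /(_ isT) /eqP.
  by rewrite oner_eq0.
have bB : inDelta B b.
  by apply/inDeltaP => l lB; rewrite mxE eqxx /=; case: (l =P k) => // lk; rewrite -lk (negbTE lB) in kB.
have [j1 e1] : exists j, mk3 0 0 e = col j.
  apply: N2_col1; exists e, 0, 0, 0; split; rewrite ?inDelta0 ?eqxx //.
  by rewrite addr0.
have [j2 e2] : exists j, mk3 b 0 e = col j.
  apply: N2_col1; exists e, b, 0, 0; split; rewrite ?inDelta0 ?eqxx //.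
  by rewrite addr0.
have [j3 e3] : exists j, mk3 e 0 e = col j.
  apply: N2_col1; exists e, 0, 0, e; split; rewrite ?inDelta0 ?eqxx ?orbT //.
  by rewrite add0r.
have [j4 e4] : exists j, mk3 (b + e) 0 e = col j.
  apply: N2_col1; exists e, b, 0, e; split; rewrite ?inDelta0 ?eqxx ?orbT //.
have c1a : col j1 0 (i1 i0) = 0 by rewrite -e1 mk3E1 mxE.
have c1b : col j1 0 (i1 k) = 0 by rewrite -e1 mk3E1 mxE.
have c2a : col j2 0 (i1 i0) = 0 by rewrite -e2 mk3E1 mxE eqxx eq_sym ki0.
have c2b : col j2 0 (i1 k) = 1 by rewrite -e2 mk3E1 mxE !eqxx.
have c3a : col j3 0 (i1 i0) = 1 by rewrite -e3 mk3E1 mxE !eqxx.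
have c3b : col j3 0 (i1 k) = 0 by rewrite -e3 mk3E1 mxE eqxx ki0.
have c4a : col j4 0 (i1 i0) = 1 by rewrite -e4 mk3E1 !mxE !eqxx eq_sym ki0 add0r.
have c4b : col j4 0 (i1 k) = 1 by rewrite -e4 mk3E1 !mxE !eqxx ki0 addr0.
have o1 := oner_neq0 F.
have o1p : (0 : F) != 1 by rewrite eq_sym o1.
have neq : forall ja jb, (col ja 0 (i1 i0) != col jb 0 (i1 i0)) || (col ja 0 (i1 k) != col jb 0 (i1 k)) -> ja != jb.
  by move=> ja jb; apply: contraL => /eqP ->; rewrite !eqxx.
apply: (@wt_exists [:: j1; j2; j3; j4] (fun _ => 1)) => //.
- rewrite /= !inE !negb_or !neq //.
  all: rewrite ?c1a ?c1b ?c2a ?c2b ?c3a ?c3b ?c4a ?c4b ?eqxx ?o1 ?orbT //. all: try by apply/orP; left; apply/eqP => /esym /eqP; rewrite oner_eq0.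
- rewrite !big_cons big_nil !scale1r -e1 -e2 -e3 -e4 !addr0 !mk3D !add0r.
  by rewrite [e + (b + e)]addrCA (vv e) !addr0 (vv b) (vv e) /mk3 !row_mx0.
Qed.

End F2.


Lemma notDelta_coord (v : 'rV[F]_m) k : v 0 k != 0 -> k \notin A -> ~~ inDelta A v.
Proof. by move=> vk kA; apply/negP => /inDeltaP /(_ k kA) /eqP; apply/negP. Qed.

Lemma idx_neq (x y : 'rV[F]_(m + m + m)) jx jy (ax ay : F) : ay != 0 ->
  x = ax *: col jx -> y = ay *: col jy -> (forall b : F, x != b *: y) -> jx != jy.
Proof.
move=> ay0 ex ey H; apply/eqP => ej; subst jy.
have := H (ax / ay); rewrite ey scalerA mulfVK // -ex.
by rewrite eqxx.
Qed.

Lemma exists_w3 (i j : 'I_m) (c : F) : i \notin A -> j != i ->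
  (c != 0) || (j \notin A) -> (1 + c != 0) || (j \notin A) ->
  exists2 v, codeword Cd v & (v != 0) && (wt v == 3%N).
Proof.
move=> iA ji hc h1c.
set p : 'rV[F]_m := delta_mx 0 i; set r : 'rV[F]_m := c *: delta_mx 0 i + delta_mx 0 j.
have ij : (i == j) = false by apply/negbTE; rewrite eq_sym.
have pi : p 0 i = 1 by rewrite mxE !eqxx.
have pj : p 0 j = 0 by rewrite mxE eqxx eq_sym ij.
have ri : r 0 i = c by rewrite !mxE !eqxx ij mulr1 addr0.
have rj : r 0 j = 1 by rewrite !mxE !eqxx eq_sym ij mulr0 add0r.
have o1 := oner_neq0 F.
have pN : ~~ inDelta A p by apply: (notDelta_coord (k := i)); rewrite ?pi.
have rN : ~~ inDelta A r.
  case/orP: hc => h; first by apply: (notDelta_coord (k := i)); rewrite ?ri.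
  by apply: (notDelta_coord (k := j)); rewrite ?rj.
have prN : ~~ inDelta A (p + r).
  case/orP: h1c => h; first by apply: (notDelta_coord (k := i)); rewrite // mxE pi ri.
  by apply: (notDelta_coord (k := j)); rewrite // mxE pj rj add0r.
have inz : forall z, ~~ inDelta A z -> inN2 A B C (mk3 0 0 z).
  move=> z zN; exists z, 0, 0, 0; split; rewrite ?inDelta0 ?eqxx //.
  by rewrite addr0.
have [j1 [a1 a10 e1]] := N2_col (inz _ pN).
have [j2 [a2 a20 e2]] := N2_col (inz _ rN).
have [j3 [a3 a30 e3]] := N2_col (inz _ prN).
have scal : forall (z w : 'rV[F]_m) (b : F), mk3 0 0 z = b *: mk3 0 0 w -> z = b *: w.
  by move=> z w b; rewrite mk3Z !scaler0 => /mk3_inj [_ _ ->].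
have coord : forall (z w : 'rV[F]_m) (b : F) k, z = b *: w -> z 0 k = b * w 0 k.
  by move=> z w b k ->; rewrite mxE.
have n12 : j1 != j2.
  apply: (idx_neq a20 e1 e2) => b; apply/eqP => /scal e.
  have := coord _ _ _ j e; rewrite pj rj mulr1 => b0; subst b.
  by move: (coord _ _ _ i e); rewrite pi mul0r; apply/eqP.
have n13 : j1 != j3.
  apply: (idx_neq a30 e1 e3) => b; apply/eqP => /scal e.
  have := coord _ _ _ j e; rewrite pj mxE pj rj add0r mulr1 => b0; subst b.
  by move: (coord _ _ _ i e); rewrite pi mul0r; apply/eqP.
have n23 : j2 != j3.
  apply: (idx_neq a30 e2 e3) => b; apply/eqP => /scal e.
  have := coord _ _ _ j e; rewrite rj mxE pj rj add0r mulr1 => b1; subst b.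
  move: (coord _ _ _ i e); rewrite ri mxE pi ri mul1r => /eqP.
  by rewrite -subr_eq0 opprD addrA addrAC subrr add0r oppr_eq0 (negbTE o1).
have n21 : (j2 == j1) = false by rewrite eq_sym (negbTE n12).
have n31 : (j3 == j1) = false by rewrite eq_sym (negbTE n13).
have n32 : (j3 == j2) = false by rewrite eq_sym (negbTE n23).
apply: (@wt_exists [:: j1; j2; j3]
   (fun k => if k == j1 then a1 else if k == j2 then a2 else - a3)) => //.
- by rewrite /= !inE negb_or n12 n13 n23.
- move=> k; rewrite !inE => /orP [/eqP ->|/orP [/eqP ->|/eqP ->]].
  + by rewrite eqxx.
  + by rewrite n21 eqxx.
  + by rewrite n31 n32 oppr_eq0.
- rewrite !big_cons big_nil eqxx n21 eqxx n31.
  rewrite n32 addr0 scaleNr -e1 -e2 -e3 mk3N !mk3D.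
  by rewrite subrr addr0 addrA subrr /mk3 !row_mx0.
Qed.


Lemma card4 (T : finType) (a b c d : T) : (#|[set a; b; c; d]| <= 4)%N.
Proof.
have H := card_size [:: a; b; c; d]; apply: leq_trans H.
apply: subset_leq_card; apply/subsetP => x; rewrite !inE. by rewrite -!orbA.
Qed.

Lemma dist_opt (q2 : #|F| = 2%N) (hB1 : (0 < #|B|)%N) (hC1 : (0 < #|C|)%N)
  (hn : n = (2 ^ (m + #|B| + #|C|))%N) : distance_optimal Cd 4.
Proof.
move=> k1 D [rD [_ lb]].
rewrite rank_dual in rD.
set K := cokermx D.
have rK : \rank K = (m + #|C| + m)%N.
  by rewrite mxrank_coker -/(code_dim D) rD subKn // rankGT_le.
set h := (2 ^ (m + #|B| + #|C|).-1)%N.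
have hh : n = (h + h)%N.
  rewrite hn /h addnn -mul2n -expnS prednK //.
  by rewrite addn_gt0 hC1 orbT.
pose idx1 (i : 'I_h) : 'I_n := cast_ord (esym hh) (lshift h i).
pose idx2 (j : 'I_h) : 'I_n := cast_ord (esym hh) (rshift h j).
pose u (t : 'I_h * 'I_h) : 'rV[F]_n := delta_mx 0 (idx1 t.1) + delta_mx 0 (idx2 t.2).
pose g t := u t *m K.
have o1 := oner_neq0 F.
have uE : forall t l, u t 0 l = ((l == idx1 t.1)%:R + (l == idx2 t.2)%:R : F).
  by move=> t l; rewrite !mxE.
have n12 : forall i j, (idx1 i == idx2 j) = false.
  move=> i j; apply/negbTE; rewrite -val_eqE /= neq_ltn.
  by rewrite (leq_trans (ltn_ord i)) ?leq_addr.
have ginj : injective g.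
  move=> t t' /eqP; rewrite /g -subr_eq0 -mulmxBl -submxE => cw.
  have ut : u t = u t'.
    apply/eqP; rewrite -subr_eq0; apply: contraT => nz.
    suff H : (wt (u t - u t') <= 4)%N by have := leq_trans (lb _ cw nz) H.
    apply: leq_trans (card4 (idx1 t.1) (idx2 t.2) (idx1 t'.1) (idx2 t'.2)).
    apply: subset_leq_card; apply/subsetP => l; rewrite !inE !mxE eqxx /=.
    apply: contraR; rewrite !negb_or.
    move=> /andP [/andP [/andP [/negbTE -> /negbTE ->] /negbTE ->] /negbTE ->].
    by rewrite !addr0 subrr eqxx.
  have := congr1 (fun v : 'rV[F]_n => v 0 (idx1 t.1)) ut; rewrite /= !uE eqxx n12 addr0.
  case: (idx1 t.1 =P idx1 t'.1) => [e1|_]; last first.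
    by rewrite n12 addr0 => /eqP; rewrite mulr1n mulr0n oner_eq0.
  have := congr1 (fun v : 'rV[F]_n => v 0 (idx2 t.2)) ut; rewrite /= !uE eqxx.
  rewrite [idx2 t.2 == idx1 _]eq_sym n12 add0r [idx2 t.2 == idx1 _]eq_sym n12 add0r.
  case: (idx2 t.2 =P idx2 t'.2) => [e2|_]; last by move=> /eqP; rewrite mulr1n mulr0n oner_eq0.
  move: t t' e1 e2 {ut cw} => [i j] [i' j'] /= /(congr1 val) /= e1 /(congr1 val) /= e2.
  move=> _ _; congr (_, _); apply: val_inj; [exact: e1 | exact: (addnI e2)].
have := subset_leq_card (_ : [set g t | t in [set: 'I_h * 'I_h]] \subset rowg K).
rewrite card_imset // cardsT card_prod !card_ord card_rowg rK q2.
rewrite /h -expnD leq_exp2l // => /(_ _) H.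
have : ((m + #|B| + #|C|).-1 + (m + #|B| + #|C|).-1 <= m + #|C| + m)%N.
  apply: H; apply/subsetP => v /imsetP [t _ ->]; rewrite inE; exact: submxMl.
by lia.
Qed.

End Main.

Theorem mainTheorem15 (F : finFieldType) (m : nat) (A B C : {set 'I_m})
  (hm : (2 <= m)%N)
  (hA0 : A != set0) (hB0 : B != set0) (hC0 : C != set0)
  (hBA : B \subset A) (hAm : A \proper [set: 'I_m])
  (n : nat) (col : 'I_n -> 'rV[F]_(m + m + m))
  (hcol : projective_rep_system A B C col) :
  let q := #|F| in
  let Cd := dual_code (gen_matrix col) in
  ((2 < q)%N \/ (q = 2%N /\ (#|A| <= m - 2)%N) ->
     n = ((2 * q ^ (#|B| + #|C|) * (q ^ m - q ^ #|A|)) %/ (q - 1))%N /\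
     code_params Cd (n - 2 * m - #|C|)%N 3%N)
  /\
  (q = 2%N -> #|A| = (m - 1)%N ->
     n = (2 ^ (m + #|B| + #|C|))%N /\
     code_params Cd (2 ^ (m + #|B| + #|C|) - 2 * m - #|C|)%N 4%N /\
     distance_optimal Cd 4%N).
Proof.
move=> q Cd0.
have NN : (n * (q - 1))%N = ((q ^ m - q ^ #|A|) * q ^ #|B| * q ^ #|C| * 2)%N.
  by rewrite -(n_card hcol) (cardN2set _ C hBA).
have dim : code_dim Cd0 = (n - 2 * m - #|C|)%N.
  rewrite /Cd0 (rank_dual hAm hcol); have := rankGT_le hAm hcol; lia.
have hq1 : (1 < q)%N := card_finNzRing_gt1 F.
have hB1 : (0 < #|B|)%N by rewrite card_gt0.
have hC1 : (0 < #|C|)%N by rewrite card_gt0.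
split.
  move=> hq; split.
    have -> : (2 * q ^ (#|B| + #|C|) * (q ^ m - q ^ #|A|) = n * (q - 1))%N.
      rewrite NN expnD.
      set X := (q ^ m - q ^ #|A|)%N; set Y := (q ^ #|B|)%N; set Z := (q ^ #|C|)%N.
      by rewrite mulnC -!mulnA; congr (_ * _)%N; rewrite mulnC -!mulnA; congr (_ * _)%N; rewrite mulnC.
    by rewrite mulnK // subn_gt0.
  split => //; split; last exact: (wt_ge3 hcol).
  case: hq => [hq|[q2 hA2]].
    case/properP: hAm => _ [i _ iA].
    have [j ji] : exists j : 'I_m, j != i.
      have : (1 < #|'I_m|)%N by rewrite card_ord.
      case/card_gt1P => x [y [_ _ xy]].
      case: (eqVneq x i) => [xi|xi]; last by exists x.
      by exists y; rewrite -xi eq_sym.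
    have : ~~ ([set: F] \subset [set 0; -1]).
      apply: contraL hq => /subset_leq_card; rewrite cardsT cards2 -/q => H.
      by rewrite -leqNgt; apply: leq_trans H _; case: (_ != _).
    case/subsetPn => c _; rewrite !inE negb_or => /andP [c0 c1].
    apply: (exists_w3 (c := c) hcol iA ji); rewrite ?c0 //.
    apply/orP; left; apply: contra c1.
    by move=> /eqP h; apply/eqP; rewrite -(addKr 1 c) h addr0.
  have : (1 < #|~: A|)%N by have := cardsC A; rewrite card_ord; lia.
  case/card_gt1P => i [j [iA jA ij]]; rewrite !inE in iA jA.
  apply: (exists_w3 (j := j) (c := 0) hcol iA); by rewrite ?jA ?orbT // eq_sym ij.
move=> q2 hA1.
have [i0 hi0] : exists i0, ~: A = [set i0].
  by apply/cards1P; have := cardsC A; rewrite card_ord; lia.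
have hi0' : forall k, (k \notin A) = (k == i0) by move=> k; rewrite -in_setC hi0 inE.
have hn : n = (2 ^ (m + #|B| + #|C|))%N.
  rewrite q2 hA1 in NN.
  have e : m = (m - 1).+1 by lia.
  rewrite {1}e expnS in NN.
  set X := (2 ^ (m - 1))%N in NN *.
  rewrite (_ : (2 * X - X)%N = X) in NN; last by lia.
  rewrite muln1 in NN; rewrite NN !expnD (_ : (2 ^ m = 2 * X)%N); last by rewrite /X -expnS -e.
  by rewrite (mulnC 2 X) (mulnAC X 2) mulnAC.
split; first exact: hn.
split.
  split; first by rewrite dim hn.
  split; last exact: (wt_ge4 hcol q2 hi0').
  by case/set0Pn: hB0 => k kB; exact: (exists_w4 hBA hcol q2 hi0' kB).
exact: (dist_opt hBA hAm hcol q2 hB1 hC1 hn).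
Qed.
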